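(* For every integer $r\ge 0$: \begin{align*} \mathrm{LCD}[6r+3,2] &< 4r+3,\\ \mathrm{LCD}[6r+4,2] &< 4r+3,\\ \mathrm{LCD}[6r+7,2] &< 4r+5,\\ \mathrm{LCD}[6r+8,2] &< 4r+6. \end{align*}
   Context: All codes are binary linear codes, i.e. subspaces of $\mathbb{F}_2^n$; an $[n,k,d]$ code is one of length $n$, dimension $k$ and minimum Hamming distance $d$. A linear code $C$ is an LCD code if $C\cap C^\perp=\{0\}$, where $C^\perp$ is the dual with respect to the standard dot product. For positive integers $n\ge k$, $\mathrm{LCD}[n,k]$ denotes the largest $d$ such that there exists a binary $[n,k,d]$ LCD code. *)

(* Defs.v *)
From mathcomp Require Import all_boot all_algebra.
Set Implicit Arguments. Unset Strict Implicit. Unset Printing Implicit Defensive.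
Import GRing.Theory.
Local Open Scope ring_scope.

Definition wt (n : nat) (v : 'rV['F_2]_n) : nat := #|[set j : 'I_n | v 0 j != 0]|.

(* Minimum distance of the code C spanned by the rows of G (a k x n generator
   matrix of full rank k): the least weight of a nonzero codeword x *m G.
   (The default n is irrelevant when k >= 1 and G has rank k.) *)
Definition mindist (k n : nat) (G : 'M['F_2]_(k, n)) : nat :=
  \big[minn/n]_(x : 'rV['F_2]_k | x *m G != 0) wt (x *m G).

(* The code spanned by G is LCD: C ∩ C^⊥ = {0}, where C^⊥ = {u | u *m G^T = 0}
   = kermx G^T (the dual for the standard dot product). *)
Definition is_LCD (k n : nat) (G : 'M['F_2]_(k, n)) : bool :=
  ((G :&: kermx G^T)%MS == 0).

Definition LCD (n k : nat) : nat :=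
  \max_(G : 'M['F_2]_(k, n) | (\rank G == k) && is_LCD G) mindist G.

(* Main.v *)
Require Import Defs.
From mathcomp Require Import all_boot all_algebra.
From mathcomp Require Import zify.
Set Implicit Arguments. Unset Strict Implicit. Unset Printing Implicit Defensive.
Import GRing.Theory.
Local Open Scope ring_scope.

Lemma bigmin_le_seq (T : eqType) (s : seq T) (P : pred T) (F : T -> nat) n x0 :
  x0 \in s -> P x0 -> (\big[minn/n]_(x <- s | P x) F x <= F x0)%N.
Proof.
elim: s => // y s IH; rewrite inE big_cons => /orP [/eqP <-|xs] Px0.
  by rewrite Px0 geq_minl.
case: (P y); last exact: IH.
by rewrite geq_min IH ?orbT.
Qed.

Lemma mindist_le k n (G : 'M['F_2]_(k, n)) x :
  x *m G != 0 -> (mindist G <= wt (x *m G))%N.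
Proof.
move=> H; rewrite /mindist.
by apply: bigmin_le_seq => //; rewrite mem_index_enum.
Qed.

Lemma wtE n (v : 'rV['F_2]_n) : wt v = (\sum_(j < n) (v 0%R j != 0%R) : nat)%N.
Proof.
rewrite /wt -sum1_card big_mkcond /=; apply: eq_bigr => j _.
by rewrite inE; case: (v 0 j != 0).
Qed.

Lemma F2_01 (x : 'F_2) : x = 0 \/ x = 1.
Proof.
case: x => [[|[|m]] H]; [left|right|]; try by apply/val_inj.
exfalso; have := H; rewrite (@Fp_cast 2) //=.
Qed.
Lemma F2_col (a b : 'F_2) : ((a != 0%R) + (b != 0%R) + ((a + b)%R != 0%R) <= 2)%N.
Proof.
have two : (1 + 1 = 0 :> 'F_2) by rewrite -[(1+1)]/(2%:R) (@pchar_Fp_0 2).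
case: (F2_01 a) => ->; case: (F2_01 b) => ->; rewrite ?two ?addr0 ?add0r ?oner_eq0 ?eqxx //.
Qed.

Lemma plotkin2 n (G : 'M['F_2]_(2, n)) : \rank G = 2 -> (3 * mindist G <= 2 * n)%N.
Proof.
move=> rk.
have free : row_free G by rewrite /row_free rk.
have nz (x : 'rV['F_2]_2) : x != 0 -> x *m G != 0.
  move=> xn; apply: contra xn => /eqP xG.
  by apply/eqP; apply: (row_free_inj free); rewrite xG mul0mx.
set e0 : 'rV['F_2]_2 := delta_mx 0 0.
set e1 : 'rV['F_2]_2 := delta_mx 0 1.
have e0n : e0 != 0 by apply/eqP => /matrixP /(_ 0 0); rewrite !mxE.
have e1n : e1 != 0 by apply/eqP => /matrixP /(_ 0 1); rewrite !mxE.
have e2n : e0 + e1 != 0 by apply/eqP => /matrixP /(_ 0 0); rewrite !mxE.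
have h0 := mindist_le (nz _ e0n).
have h1 := mindist_le (nz _ e1n).
have h2 := mindist_le (nz _ e2n).
have : (wt (e0 *m G) + wt (e1 *m G) + wt ((e0 + e1) *m G) <= 2 * n)%N.
  rewrite !wtE -!big_split /=.
  apply: (@leq_trans (\sum_(j < n) 2)%N); last by rewrite sum_nat_const card_ord mulnC.
  apply: leq_sum => j _.
  rewrite mulmxDl; have -> : (e0 *m G + e1 *m G) 0 j = (e0 *m G) 0 j + (e1 *m G) 0 j by rewrite mxE.
  exact: F2_col.
by move=> H; apply: leq_trans H; rewrite !mulSn mul0n addn0 addnA; apply: leq_add; first apply: leq_add.
Qed.

Lemma LCD2_le n : (3 * LCD n 2 <= 2 * n)%N.
Proof.
rewrite /LCD.
have -> : (3 * \max_(G : 'M['F_2]_(2, n) | (\rank G == 2) && is_LCD G) mindist G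
   = \max_(G : 'M['F_2]_(2, n) | (\rank G == 2) && is_LCD G) (3 * mindist G))%N.
  by rewrite big_distrr.
apply/bigmax_leqP => G /andP [/eqP rk _]; exact: plotkin2.
Qed.

Local Close Scope ring_scope.
Theorem proposition2p3 (r : nat) :
  [/\ LCD (6 * r + 3) 2 < 4 * r + 3,
      LCD (6 * r + 4) 2 < 4 * r + 3,
      LCD (6 * r + 7) 2 < 4 * r + 5
    & LCD (6 * r + 8) 2 < 4 * r + 6].
Proof.
have := LCD2_le (6 * r + 3); have := LCD2_le (6 * r + 4);
have := LCD2_le (6 * r + 7); have := LCD2_le (6 * r + 8).
move=> h1 h2 h3 h4; split; lia.
Qed.
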